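(* Assume $a>0$. For $r\in(0,1]$ and $t>0$ let $x_{\rm L}(r,t,a)$ denote the left edge of the support of the three-parametric MP density $\rho(\cdot;r,t,a)$, namely the middle real root of the cubic \[ S(x;r,t,a)=4ax^3-\{8a^2+4a(3r+2)t-t^2\}x^2+2\big[2a^3-2a^2(5r-2)t+a\{r(6r-1)+1\}t^2-(r+1)t^3\big]x+(r-1)^2t^2\{a^2-a(4r-2)t+t^2\}. \] (i) The time-evolution of the support touches the origin $x=0$ (i.e. $x_{\rm L}(r,t,a)=0$ for some $t>0$) if and only if $r=1$; for $r\in(0,1)$ one has $x_{\rm L}(r,t,a)>0$. (ii) When $r=1$, with the critical time $t_{\rm c}(a):=a$, one has $x_{\rm L}(1,t,a)>0$ for $0\le t<t_{\rm c}(a)$ and $x_{\rm L}(1,t,a)=0$ for all $t\ge t_{\rm c}(a)$. Moreover \[ x_{\rm L}(1,t,a)\simeq\frac{4}{27a^2}(t_{\rm c}(a)-t)^{3}\quad\text{as } t\nearrow t_{\rm c}(a). \]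
   Context: The three-parametric MP density $\rho(x;r,t,a)$ ($r\in(0,1]$, $t>0$, $a\ge0$) is the density of the weak limit, as $N,M\to\infty$ with $N/M\to r$, of $\frac1N\sum_{j}\delta_{X^N_j(t)/M}$, where $X^N_j$ solve $dX^N_j=2\sqrt{X^N_j}dB_j+2(M-N+1)dt+4X^N_j\sum_{k\neq j}\frac{dt}{X^N_j-X^N_k}$ with independent standard Brownian motions $B_j$ and $X^N_j(0)=aM$; equivalently its Stieltjes transform $G$ solves $z=\frac1G+\frac{t}{1-rtG}+\frac{a}{(1-rtG)^2}$. Its support is $[x_{\rm L}(r,t,a),x_{\rm R}(r,t,a)]$ where $x_{\rm L}\le x_{\rm R}$ are the two largest of the three real roots of $S(\cdot;r,t,a)$. The notation $f\simeq g$ means $f/g\to1$. *)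

(* Defs.v *)
From Stdlib Require Import Reals ClassicalEpsilon.
From Coquelicot Require Import Coquelicot.
Open Scope R_scope.

Definition S (x r t a : R) : R :=
  4 * a * x ^ 3
  - (8 * a ^ 2 + 4 * a * (3 * r + 2) * t - t ^ 2) * x ^ 2
  + 2 * (2 * a ^ 3 - 2 * a ^ 2 * (5 * r - 2) * t
         + a * (r * (6 * r - 1) + 1) * t ^ 2 - (r + 1) * t ^ 3) * x
  + (r - 1) ^ 2 * t ^ 2 * (a ^ 2 - a * (4 * r - 2) * t + t ^ 2).

Definition is_middle_root (r t a x : R) : Prop :=
  exists y1 y3 : R, y1 <= x <= y3 /\
    forall y : R, S y r t a = 4 * a * (y - y1) * (y - x) * (y - y3).

(* x_L(r,t,a): the middle real root of S (chosen by classical choice; it is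
   unique whenever it exists). *)
Definition xL (r t a : R) : R :=
  epsilon (inhabits 0) (is_middle_root r t a).

(* Main.v *)
Require Import Defs.
From Stdlib Require Import Reals Lra Psatz ClassicalEpsilon.
From Coquelicot Require Import Coquelicot.
Open Scope R_scope.

Lemma mid_unique (c y1 x y3 z1 x' z3 : R) : c <> 0 ->
  y1 <= x <= y3 -> z1 <= x' <= z3 ->
  (forall y, c * (y - y1) * (y - x) * (y - y3) = c * (y - z1) * (y - x') * (y - z3)) ->
  x = x'.
Proof.
  intros hc [h1 h2] [h3 h4] H.
  assert (E1 : y1 + x + y3 = z1 + x' + z3).
  { pose proof (H 0) as H0. pose proof (H 1) as H1. pose proof (H (-1)) as Hm.
    apply (Rmult_eq_reg_l c); [|exact hc]. nra. }
  assert (Hx := H x). assert (Hx' := H x').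
  replace (c * (x - y1) * (x - x) * (x - y3)) with 0 in Hx by ring.
  replace (c * (x' - y1) * (x' - x) * (x' - y3))
    with (c * ((x' - y1) * (x' - x) * (x' - y3))) in Hx' by ring.
  replace (c * (x' - z1) * (x' - x') * (x' - z3)) with 0 in Hx' by ring.
  replace (c * (x - z1) * (x - x') * (x - z3))
    with (c * ((x - z1) * (x - x') * (x - z3))) in Hx by ring.
  symmetry in Hx.
  apply Rmult_integral in Hx. apply Rmult_integral in Hx'.
  destruct Hx as [Hx|Hx]; [contradiction|].
  destruct Hx' as [Hx'|Hx']; [contradiction|].
  apply Rmult_integral in Hx as [Hx|Hx]; apply Rmult_integral in Hx' as [Hx'|Hx'].
  all: try (apply Rmult_integral in Hx as [Hx|Hx]).
  all: try (apply Rmult_integral in Hx' as [Hx'|Hx']).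
  all: lra.
Qed.

Lemma xL_eq (r t a x : R) : 0 < a -> is_middle_root r t a x -> xL r t a = x.
Proof.
  intros ha Hm. unfold xL.
  assert (He : exists x, is_middle_root r t a x) by (exists x; exact Hm).
  pose proof (@epsilon_spec R (inhabits 0) _ He) as Hs.
  set (e := epsilon (inhabits 0) (is_middle_root r t a)) in *.
  destruct Hm as (y1 & y3 & Ho & Hf). destruct Hs as (z1 & z3 & Ho' & Hf').
  symmetry. apply (mid_unique (4*a) y1 x y3 z1 e z3); [lra|auto|auto|].
  intro y. rewrite <- Hf, <- Hf'. reflexivity.
Qed.

Lemma cubic3 (c3 c2 c1 c0 u z p : R) : 0 < c3 -> u < z < p ->
  c3*z^3+c2*z^2+c1*z+c0 = 0 -> 0 < c3*u^3+c2*u^2+c1*u+c0 ->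
  c3*p^3+c2*p^2+c1*p+c0 < 0 ->
  exists y1 y3, y1 <= z <= y3 /\
    forall y, c3*y^3+c2*y^2+c1*y+c0 = c3*(y-y1)*(y-z)*(y-y3).
Proof.
  intros hc [hu hp] Hz Hu Hp.
  set (b := c3*z + c2). set (c := c3*z^2 + c2*z + c1).
  assert (Hdec : forall y, c3*y^3+c2*y^2+c1*y+c0 = (y - z)*(c3*y^2+b*y+c)).
  { intro y. unfold b, c. replace c0 with (-(c3*z^3+c2*z^2+c1*z)) by lra. ring. }
  assert (qu : c3*u^2+b*u+c < 0).
  { rewrite Hdec in Hu. nra. }
  assert (qp : c3*p^2+b*p+c < 0).
  { rewrite Hdec in Hp. nra. }
  set (d := b^2 - 4*c3*c).
  assert (hd : 0 < d).
  { assert (E : 4*c3*(c3*u^2+b*u+c) = (2*c3*u+b)^2 - d) by (unfold d; ring).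
    assert (E2 : c3*(c3*u^2+b*u+c) < 0).
    { rewrite <- (Rmult_0_r c3). apply Rmult_lt_compat_l; lra. }
    pose proof (pow2_ge_0 (2*c3*u+b)). lra. }
  set (s := sqrt d).
  assert (hs : s * s = d) by (apply sqrt_sqrt; lra).
  assert (hs0 : 0 < s) by (apply sqrt_lt_R0; lra).
  exists ((-b - s)/(2*c3)), ((-b + s)/(2*c3)).
  assert (Hq : forall y, c3*y^2+b*y+c = c3*(y-(-b - s)/(2*c3))*(y-(-b + s)/(2*c3))).
  { intro y. replace c with ((b^2 - s*s)/(4*c3)).
    - field. lra.
    - rewrite hs. unfold d. field. lra. }
  assert (h13 : (-b - s)/(2*c3) < (-b + s)/(2*c3)).
  { apply Rmult_lt_compat_r; [apply Rinv_0_lt_compat; lra| lra]. }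
  rewrite Hq in qu, qp.
  set (Y1 := (-b - s)/(2*c3)) in *. set (Y3 := (-b + s)/(2*c3)) in *.
  clearbody Y1 Y3.
  assert (a1 : Y1 < u).
  { destruct (Rlt_or_le Y1 u) as [h|h]; [exact h|exfalso].
    assert (0 <= (Y1 - u)*(Y3 - u)) by (apply Rmult_le_pos; lra). nra. }
  assert (a3 : p < Y3).
  { destruct (Rlt_or_le p Y3) as [h|h]; [exact h|exfalso].
    assert (0 <= (p - Y1)*(p - Y3)) by (apply Rmult_le_pos; lra). nra. }
  split.
  - split; lra.
  - intro y. rewrite Hdec, Hq. ring.
Qed.

Lemma S_cubic (y r t a : R) : S y r t a =
  (4*a)*y^3 + (-(8 * a ^ 2 + 4 * a * (3 * r + 2) * t - t ^ 2))*y^2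
  + (2 * (2 * a ^ 3 - 2 * a ^ 2 * (5 * r - 2) * t
         + a * (r * (6 * r - 1) + 1) * t ^ 2 - (r + 1) * t ^ 3))*y
  + (r - 1) ^ 2 * t ^ 2 * (a ^ 2 - a * (4 * r - 2) * t + t ^ 2).
Proof. unfold S. ring. Qed.

Lemma S_cont (r t a : R) : continuity (fun y => S y r t a).
Proof. unfold S. reg. Qed.

Lemma mid_pos (r t a : R) : 0 < r < 1 -> 0 < t -> 0 < a ->
  exists z, 0 < z /\ is_middle_root r t a z.
Proof.
  intros hr ht ha.
  assert (S0 : 0 < S 0 r t a).
  { unfold S.
    assert (h1 : 0 < a ^ 2 - a * (4 * r - 2) * t + t ^ 2).
    { replace (a ^ 2 - a * (4 * r - 2) * t + t ^ 2) with
        ((t - a*(2*r-1))^2 + 4*a^2*(r*(1-r))) by ring.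
      assert (0 < r*(1-r)) by (apply Rmult_lt_0_compat; lra).
      assert (0 < a^2) by (apply pow_lt; lra).
      pose proof (pow2_ge_0 (t - a*(2*r-1))). nra. }
    assert (h2 : 0 < (r-1)^2 * t^2).
    { replace ((r-1)^2) with ((1-r)^2) by ring. apply Rmult_lt_0_compat; apply pow_lt; lra. }
    replace (4 * a * 0 ^ 3 - (8 * a ^ 2 + 4 * a * (3 * r + 2) * t - t ^ 2) * 0 ^ 2 +
      2 * (2 * a ^ 3 - 2 * a ^ 2 * (5 * r - 2) * t + a * (r * (6 * r - 1) + 1) * t ^ 2 -
      (r + 1) * t ^ 3) * 0 + (r - 1) ^ 2 * t ^ 2 * (a ^ 2 - a * (4 * r - 2) * t + t ^ 2))
      with (((r - 1) ^ 2 * t ^ 2) * (a ^ 2 - a * (4 * r - 2) * t + t ^ 2)) by ring.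
    apply Rmult_lt_0_compat; lra. }
  set (p := a + (1+r)*t).
  assert (hp : 0 < p) by (unfold p; assert (0<(1+r)*t) by (apply Rmult_lt_0_compat; lra); lra).
  assert (Sp : S p r t a < 0).
  { replace (S p r t a) with (-(4*r*t*(2*a+t)^3 + 27*r^2*t^2*a^2))
      by (unfold S, p; ring).
    assert (0 < 4*r*t*(2*a+t)^3).
    { repeat apply Rmult_lt_0_compat; try lra; apply pow_lt; lra. }
    assert (0 < 27*r^2*t^2*a^2).
    { repeat apply Rmult_lt_0_compat; try lra; apply pow_lt; lra. }
    lra. }
  destruct (IVT (fun y => - S y r t a) 0 p) as [z [Hz1 Hz2]].
  - apply continuity_opp, S_cont.
  - exact hp.
  - lra.
  - lra.
  assert (Hz : S z r t a = 0) by lra.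
  assert (z0 : 0 < z).
  { destruct Hz1 as [h _]. destruct h as [h|h]; [exact h|]. rewrite <- h in Hz2; lra. }
  assert (zp : z < p).
  { destruct Hz1 as [_ h]. destruct h as [h|h]; [exact h|]. rewrite h in Hz2; lra. }
  rewrite !S_cubic in S0, Sp, Hz.
  destruct (cubic3 (4*a) _ _ _ 0 z p ltac:(lra) ltac:(lra) Hz S0 Sp) as (y1 & y3 & Ho & Hf).
  exists z. split; [exact z0|]. exists y1, y3. split; [exact Ho|].
  intro y. rewrite S_cubic. apply Hf.
Qed.

Definition Bq (t a : R) := 8*a^2 + 20*a*t - t^2.
Definition Dq (t a : R) := Bq t a ^ 2 - 64*a*(a-t)^3.
Definition xm (t a : R) := (Bq t a - sqrt (Dq t a)) / (8*a).
Definition xp (t a : R) := (Bq t a + sqrt (Dq t a)) / (8*a).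

Lemma Dq_nonneg (t a : R) : 0 < a -> 0 <= t -> 0 <= Dq t a.
Proof.
  intros ha ht. replace (Dq t a) with (t * (t+8*a)^3) by (unfold Dq, Bq; ring).
  apply Rmult_le_pos; [lra|]. apply pow_le; lra.
Qed.

Lemma S1_fact (t a : R) : 0 < a -> 0 <= t -> forall y,
  S y 1 t a = 4*a*(y - 0)*(y - xm t a)*(y - xp t a).
Proof.
  intros ha ht y.
  pose proof (sqrt_sqrt _ (Dq_nonneg t a ha ht)) as hs.
  set (s := sqrt (Dq t a)) in *.
  unfold xm, xp. fold s.
  replace (S y 1 t a) with (y*(4*a*y^2 - Bq t a*y + 4*(a-t)^3)) by (unfold S, Bq; ring).
  replace (4*(a-t)^3) with ((Bq t a ^2 - s*s)/(16*a)).
  - field. lra.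
  - rewrite hs. unfold Dq. field. lra.
Qed.

Lemma r1_small (t a : R) : 0 < a -> 0 <= t < a ->
  0 < xm t a /\ is_middle_root 1 t a (xm t a).
Proof.
  intros ha ht.
  pose proof (sqrt_sqrt _ (Dq_nonneg t a ha (proj1 ht))) as hs.
  pose proof (sqrt_pos (Dq t a)) as hs0.
  assert (hB : 0 < Bq t a) by (unfold Bq; nra).
  assert (hlt : sqrt (Dq t a) < Bq t a).
  { assert (0 < (a-t)^3) by (apply pow_lt; lra).
    assert (Dq t a < Bq t a ^ 2) by (unfold Dq; nra).
    nra. }
  assert (h0 : 0 < xm t a).
  { unfold xm. apply Rdiv_lt_0_compat; lra. }
  split; [exact h0|].
  exists 0, (xp t a). split.
  - split; [lra|]. unfold xm, xp. apply Rmult_le_compat_r.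
    + left. apply Rinv_0_lt_compat. lra.
    + lra.
  - apply S1_fact; lra.
Qed.

Lemma r1_large (t a : R) : 0 < a -> a <= t -> is_middle_root 1 t a 0.
Proof.
  intros ha ht.
  pose proof (sqrt_sqrt _ (Dq_nonneg t a ha ltac:(lra))) as hs.
  pose proof (sqrt_pos (Dq t a)) as hs0.
  assert (hle : Bq t a ^ 2 <= Dq t a).
  { assert (0 <= (t-a)^3) by (apply pow_le; lra).
    unfold Dq. replace ((a-t)^3) with (-(t-a)^3) by ring. nra. }
  assert (h1 : Bq t a <= sqrt (Dq t a)) by nra.
  assert (h2 : - Bq t a <= sqrt (Dq t a)) by nra.
  exists (xm t a), (xp t a). split.
  - unfold xm, xp. split.
    + unfold Rdiv. assert (0 < / (8*a)) by (apply Rinv_0_lt_compat; lra). nra.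
    + unfold Rdiv. assert (0 < / (8*a)) by (apply Rinv_0_lt_compat; lra). nra.
  - intro y. rewrite (S1_fact t a ha ltac:(lra) y). ring.
Qed.

Definition gq (a t : R) := 54*a^2 / (Bq t a + sqrt (Dq t a)).

Lemma ratio_eq (a t : R) : 0 < a -> 0 < t < a ->
  xL 1 t a / (4 / (27 * a ^ 2) * (a - t) ^ 3) = gq a t.
Proof.
  intros ha ht.
  destruct (r1_small t a ha ltac:(lra)) as [_ Hm].
  rewrite (xL_eq _ _ _ _ ha Hm).
  pose proof (sqrt_sqrt _ (Dq_nonneg t a ha ltac:(lra))) as hs.
  pose proof (sqrt_pos (Dq t a)) as hs0.
  assert (hB : 0 < Bq t a) by (unfold Bq; nra).
  assert (hat : 0 < (a-t)^3) by (apply pow_lt; lra).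
  unfold xm, gq. set (s := sqrt (Dq t a)) in *. set (B := Bq t a) in *.
  assert (E : (a-t)^3 = (B^2 - s*s)/(64*a)).
  { rewrite hs. unfold Dq. fold B. field. lra. }
  assert (hne : B^2 - s*s <> 0).
  { intro h. rewrite h in E. unfold Rdiv in E. rewrite Rmult_0_l in E. lra. }
  rewrite E. field. repeat split; try lra.
Qed.

Lemma g_lim (a : R) : 0 < a -> filterlim (gq a) (locally a) (locally 1).
Proof.
  intro ha.
  assert (Ha : gq a a = 1).
  { unfold gq, Dq, Bq.
    replace ((8 * a ^ 2 + 20 * a * a - a ^ 2) ^ 2 - 64 * a * (a - a) ^ 3) with ((27*a^2)^2) by ring.
    assert (0 < a^2) by (apply pow_lt; lra).
    rewrite sqrt_pow2.
    - field. lra.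
    - lra. }
  rewrite <- Ha.
  apply (@ex_derive_continuous R_AbsRing R_NormedModule (gq a) a).
  unfold gq, Dq, Bq. auto_derive.
  assert (h2 : 0 < a*a) by nra.
  split; [nra|split; [|exact I]].
  pose proof (sqrt_pos ((8 * (a * (a * 1)) + 20 * a * a + - (a * (a * 1))) *
     ((8 * (a * (a * 1)) + 20 * a * a + - (a * (a * 1))) * 1) +
     - (64 * a * ((a + - a) * ((a + - a) * ((a + - a) * 1)))))).
  nra.
Qed.

Theorem proposition1p2 (a : R) (ha : 0 < a) :
  (* (i) *)
  (forall r : R, 0 < r <= 1 ->
     ((exists t : R, 0 < t /\ xL r t a = 0) <-> r = 1)) /\
  (forall r t : R, 0 < r < 1 -> 0 < t -> 0 < xL r t a) /\
  (* (ii), with t_c(a) = a *)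
  (forall t : R, 0 <= t < a -> 0 < xL 1 t a) /\
  (forall t : R, a <= t -> xL 1 t a = 0) /\
  filterlim (fun t => xL 1 t a / (4 / (27 * a ^ 2) * (a - t) ^ 3))
    (at_left a) (locally 1).
Proof.
  assert (Hpos : forall r t : R, 0 < r < 1 -> 0 < t -> 0 < xL r t a).
  { intros r t hr ht. destruct (mid_pos r t a hr ht ha) as (z & hz & Hm).
    rewrite (xL_eq _ _ _ _ ha Hm). exact hz. }
  assert (Hlarge : forall t : R, a <= t -> xL 1 t a = 0).
  { intros t ht. apply xL_eq; [exact ha|]. apply r1_large; assumption. }
  split; [|split; [exact Hpos|split; [|split; [exact Hlarge|]]]].
  - intros r hr. split.
    + intros (t & ht & h0). destruct (Req_dec r 1) as [e|ne]; [exact e|].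
      exfalso. assert (0 < xL r t a) by (apply Hpos; lra). lra.
    + intros ->. exists a. split; [exact ha|]. apply Hlarge. lra.
  - intros t ht. destruct (r1_small t a ha ht) as [h Hm].
    rewrite (xL_eq _ _ _ _ ha Hm). exact h.
  - apply (filterlim_ext_loc (gq a)).
    + exists (mkposreal a ha). intros y Hy Hlt.
      assert (Rabs (y - a) < a) by exact Hy.
      symmetry. apply ratio_eq; [exact ha|].
      apply Rabs_def2 in H. lra.
    + eapply filterlim_filter_le_1; [apply filter_le_within|]. apply g_lim. exact ha.
Qed.
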